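(* Let $\mathcal{H}_A,\mathcal{H}_R$ be finite-dimensional Hilbert spaces, let $\{|i\rangle_R\}_{i=1,\ldots,n}$ be an orthonormal family in $\mathcal{H}_R$, and let $\{|\psi(i)\rangle_A\}_{i=1,\ldots,n}$ be an arbitrary family of (normalized) pure states in $\mathcal{H}_A$. For $\rho_{AR}=\frac{1}{n}\sum_{i=1}^n|\psi(i)\rangle\langle\psi(i)|_A\otimes|i\rangle\langle i|_R$ and $0\leq\varepsilon<1$ we have ${\rm H}_{\min}^{\varepsilon}(A|R)_\rho=\log\frac{1}{1-\varepsilon^2}$.
   Context: $\log$ is the binary logarithm. For a positive operator $\sigma_{AR}$ with trace at most 1, ${\rm H}_{\min}(A|R)_\sigma=\sup_{\omega_R}\sup\{\lambda\in\mathbb{R}: 2^{-\lambda}\mathbb{I}_A\otimes\omega_R\geq\sigma_{AR}\}$, the outer supremum over density operators $\omega_R$ on $\mathcal{H}_R$. The purified distance is $P(\rho,\sigma)=\sqrt{1-\bar F(\rho,\sigma)^2}$ with $\bar F(\rho,\sigma)=\|\sqrt\rho\sqrt\sigma\|_1+\sqrt{(1-\mathrm{tr}\rho)(1-\mathrm{tr}\sigma)}$, where $\|X\|_1=\mathrm{tr}\sqrt{X^\dagger X}$. The smooth min-entropy is ${\rm H}_{\min}^{\varepsilon}(A|R)_\rho=\sup\{{\rm H}_{\min}(A|R)_\sigma:\sigma_{AR}\geq0,\ \mathrm{tr}\,\sigma_{AR}\leq1,\ P(\rho_{AR},\sigma_{AR})\leq\varepsilon\}$. *)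

(* Defs.v *)
From mathcomp Require Import all_boot all_order all_algebra.
From mathcomp Require Import all_classical all_reals all_analysis.
From mathcomp Require Import complex mxtens.
Set Implicit Arguments. Unset Strict Implicit. Unset Printing Implicit Defensive.
Import Order.TTheory GRing.Theory Num.Theory.
Local Open Scope ring_scope.
Local Open Scope classical_set_scope.

Section QDefs.
Variable R : realType.
Local Notation C := R[i].

Definition adjmx m n (A : 'M[C]_(m, n)) : 'M[C]_(n, m) := (map_mx conjc A)^T.

(* positive (semidefinite) operator: <v, A v> >= 0 for all v
   (the order on C is the complex partial order, so this says the
   quadratic form is real and nonnegative) *)
Definition psd n (A : 'M[C]_n) : Prop :=
  forall v : 'cV[C]_n, 0 <= (adjmx v *m A *m v) 0 0.

Definition loewner_le n (A B : 'M[C]_n) : Prop := psd (B - A).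

Definition psd_sqrt n (A : 'M[C]_n) : 'M[C]_n :=
  match pselect (exists S : 'M[C]_n, psd S /\ S *m S = A) with
  | left h => projT1 (cid h)
  | right _ => 0
  end.

Definition trR n (A : 'M[C]_n) : R := complex.Re (\tr A).

Definition trnorm n (X : 'M[C]_n) : R := trR (psd_sqrt (adjmx X *m X)).

Definition gfid n (rho sigma : 'M[C]_n) : R :=
  trnorm (psd_sqrt rho *m psd_sqrt sigma)
  + Num.sqrt ((1 - trR rho) * (1 - trR sigma)).

Definition pdist n (rho sigma : 'M[C]_n) : R :=
  Num.sqrt (1 - gfid rho sigma ^+ 2).

Definition density n (w : 'M[C]_n) : Prop := psd w /\ \tr w = 1.

Definition log2 (x : R) : R := ln x / ln 2.

(* conditional min-entropy H_min(A|R)_sigma, sigma on H_A (x) H_R,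
   valued in the extended reals (sup over empty set = -oo) *)
Definition Hmin dA dR (sigma : 'M[C]_(dA * dR)) : \bar R :=
  ereal_sup [set ereal_sup [set l%:E | l in
      [set l : R | loewner_le sigma
         ((Complex (2 `^ (- l)) 0) *: ((1%:M : 'M[C]_dA) *t w))]]
    | w in [set w : 'M[C]_dR | density w]].

Definition Hmin_smooth dA dR (eps : R) (rho : 'M[C]_(dA * dR)) : \bar R :=
  ereal_sup [set Hmin sigma | sigma in
    [set sigma : 'M[C]_(dA * dR) |
       psd sigma /\ trR sigma <= 1 /\ pdist rho sigma <= eps]].

Definition cq_state dA dR n (psi : 'I_n -> 'cV[C]_dA) (e : 'I_n -> 'cV[C]_dR)
  : 'M[C]_(dA * dR) :=
  (n%:R)^-1 *: \sum_(i < n) ((psi i *m adjmx (psi i)) *t (e i *m adjmx (e i))).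

End QDefs.

(* Main.v *)
Set Warnings "-all".
Require Import Defs.
From mathcomp Require Import all_boot all_order all_algebra.
From mathcomp Require Import all_classical all_reals all_analysis.
From mathcomp Require Import complex mxtens.
From mathcomp Require Import ring lra.
Import Order.TTheory GRing.Theory Num.Theory.
Set Implicit Arguments. Unset Strict Implicit. Unset Printing Implicit Defensive.
Local Open Scope ring_scope.

Section L.
Variable R : realType.
Local Notation C := R[i].

Lemma conjcE (x : C) : conjc x = Num.conj x. Proof. by []. Qed.

Lemma adjmxK m n (A : 'M[C]_(m,n)) : adjmx (adjmx A) = A.
Proof. by apply/matrixP => i j; rewrite /adjmx !mxE conjcK. Qed.

Lemma adjmxM m n p (A : 'M[C]_(m,n)) (B : 'M[C]_(n,p)) :
  adjmx (A *m B) = adjmx B *m adjmx A.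
Proof.
apply/matrixP => i j; rewrite /adjmx !mxE rmorph_sum /=.
by apply: eq_bigr => k _; rewrite !mxE rmorphM /= mulrC.
Qed.

Lemma adjmxD m n (A B : 'M[C]_(m,n)) : adjmx (A + B) = adjmx A + adjmx B.
Proof. by apply/matrixP => i j; rewrite /adjmx !mxE rmorphD. Qed.

Lemma adjmxN m n (A : 'M[C]_(m,n)) : adjmx (- A) = - adjmx A.
Proof. by apply/matrixP => i j; rewrite /adjmx !mxE rmorphN. Qed.

Lemma adjmxB m n (A B : 'M[C]_(m,n)) : adjmx (A - B) = adjmx A - adjmx B.
Proof. by rewrite adjmxD adjmxN. Qed.

Lemma adjmxZ m n (c : C) (A : 'M[C]_(m,n)) : adjmx (c *: A) = conjc c *: adjmx A.
Proof. by apply/matrixP => i j; rewrite /adjmx !mxE rmorphM. Qed.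

Lemma adjmx_sum m n I (r : seq I) (P : pred I) (F : I -> 'M[C]_(m,n)) :
  adjmx (\sum_(i <- r | P i) F i) = \sum_(i <- r | P i) adjmx (F i).
Proof.
apply/matrixP => i j; rewrite /adjmx !mxE !summxE rmorph_sum /=.
by apply: eq_bigr => k _; rewrite !mxE.
Qed.

Lemma adjmx0 m n : adjmx (0 : 'M[C]_(m,n)) = 0.
Proof. by apply/matrixP => i j; rewrite /adjmx !mxE rmorph0. Qed.

Lemma adjmx_scalar n (c : C) : adjmx (c%:M : 'M[C]_n) = (conjc c)%:M.
Proof.
by apply/matrixP => i j; rewrite /adjmx !mxE rmorphMn eq_sym.
Qed.

Lemma adjmx1 n : adjmx (1%:M : 'M[C]_n) = 1%:M.
Proof. by rewrite adjmx_scalar rmorph1. Qed.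

Lemma adjmx_tens m n p q (A : 'M[C]_(m,n)) (B : 'M[C]_(p,q)) :
  adjmx (A *t B) = adjmx A *t adjmx B.
Proof. by apply/matrixP => i j; rewrite /adjmx !mxE rmorphM. Qed.

Lemma conjc_real (x : R) : conjc (Complex x 0) = Complex x 0.
Proof. by rewrite /= oppr0. Qed.

Lemma mx_extv m n (A B : 'M[C]_(m,n)) :
  (forall x : 'cV[C]_n, A *m x = B *m x) -> A = B.
Proof.
move=> H; apply/matrixP => i j.
have := congr1 (fun M : 'cV[C]_m => M i 0) (H (delta_mx j 0)).
by rewrite -!colE !mxE.
Qed.

Definition dot m (v w : 'cV[C]_m) : C := (adjmx v *m w) 0 0.

Lemma dotE m (v w : 'cV[C]_m) : dot v w = \sum_k conjc (v k 0) * w k 0.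
Proof. by rewrite /dot mxE; apply: eq_bigr => k _; rewrite /adjmx !mxE. Qed.

Lemma dot_ge0 m (v : 'cV[C]_m) : 0 <= dot v v.
Proof.
rewrite dotE; apply: sumr_ge0 => k _; rewrite mulrC; exact: mulcJ_ge0.
Qed.

Lemma dot_eq0 m (v : 'cV[C]_m) : dot v v = 0 -> v = 0.
Proof.
rewrite dotE => /eqP; rewrite psumr_eq0 => [/allP H|k _]; last first.
  by rewrite mulrC; exact: mulcJ_ge0.
apply/colP => k; rewrite mxE.
have /H /= : k \in index_enum 'I_m by rewrite mem_index_enum.
rewrite mulf_eq0 => /orP [|/eqP //].
by rewrite conjc_eq0 => /eqP.
Qed.

Lemma dot_conj m (v w : 'cV[C]_m) : conjc (dot v w) = dot w v.
Proof.
rewrite !dotE rmorph_sum; apply: eq_bigr => k _.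
by rewrite rmorphM /= conjcK mulrC.
Qed.


Lemma ge0_conj (x : C) : 0 <= x -> conjc x = x.
Proof. by case: x => a b /ger0_Im /= ->; rewrite oppr0. Qed.

Definition qf m (A : 'M[C]_m) (v w : 'cV[C]_m) := (adjmx v *m A *m w) 0 0.

Lemma qfDl m (A : 'M[C]_m) v1 v2 w : qf A (v1 + v2) w = qf A v1 w + qf A v2 w.
Proof. by rewrite /qf adjmxD !mulmxDl mxE. Qed.
Lemma qfDr m (A : 'M[C]_m) v w1 w2 : qf A v (w1 + w2) = qf A v w1 + qf A v w2.
Proof. by rewrite /qf mulmxDr mxE. Qed.
Lemma qfZl m (A : 'M[C]_m) c v w : qf A (c *: v) w = conjc c * qf A v w.
Proof. by rewrite /qf adjmxZ -!scalemxAl mxE. Qed.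
Lemma qfZr m (A : 'M[C]_m) c v w : qf A v (c *: w) = c * qf A v w.
Proof. by rewrite /qf -scalemxAr mxE. Qed.

Lemma qf_delta m (A : 'M[C]_m) i j : qf A (delta_mx i 0) (delta_mx j 0) = A i j.
Proof.
rewrite /qf.
have -> : adjmx (delta_mx i 0 : 'cV[C]_m) = delta_mx 0 i.
  apply/matrixP => a b; rewrite /adjmx !mxE.
  by rewrite rmorph_nat andbC.
by rewrite -rowE -colE !mxE.
Qed.

Lemma cD (x y : C) : conjc (x + y) = conjc x + conjc y. Proof. exact: rmorphD. Qed.
Lemma cB (x y : C) : conjc (x - y) = conjc x - conjc y. Proof. exact: rmorphB. Qed.
Lemma cN (x : C) : conjc (- x) = - conjc x. Proof. exact: rmorphN. Qed.
Lemma cM (x y : C) : conjc (x * y) = conjc x * conjc y. Proof. exact: rmorphM. Qed.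

Lemma ci : conjc ('i : C) = - 'i.
Proof. by apply/eqP; rewrite eq_complex /= !oppr0 !eqxx. Qed.

Lemma psd_herm m (A : 'M[C]_m) : psd A -> adjmx A = A.
Proof.
move=> hA.
have qr : forall v, conjc (qf A v v) = qf A v v by move=> v; apply: ge0_conj; exact: hA.
have key : forall v w, qf A w v = conjc (qf A v w).
  move=> v w; set a : C := qf A v w; set b : C := qf A w v.
  have h1 : conjc (a + b) = a + b.
    have := qr (v + w); rewrite !qfDl !qfDr !rmorphD /= (qr v) (qr w) -/a -/b => E.
    transitivity (((qf A v v + conjc a) + (conjc b + qf A w w)) - qf A v v - qf A w w); first by ring.
    by rewrite E; ring.
  have h2 : conjc ('i * a - 'i * b) = 'i * a - 'i * b.
    set I : C := 'i. have ciI : conjc I = - I by exact: ci.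
    have := qr (v + I *: w); rewrite !qfDl !qfDr !qfZl !qfZr !cD !cM !cN (qr v) (qr w) -/a -/b ciI => E.
    rewrite ?cN ?cM ?ciI ?opprK in E *.
    transitivity ((qf A v v + - I * conjc a + (I * conjc b + I * (- I * qf A w w))) - qf A v v - I * (- I * qf A w w)); first by ring.
    by rewrite E; ring.
  have h3 : 'i * (conjc b - conjc a) = 'i * (a - b).
    transitivity (conjc ('i * a - 'i * b)); last by rewrite h2; ring.
    rewrite cB !cM ci; ring.
  have h4 : conjc b - conjc a = a - b.
    by apply: (mulfI _ h3); rewrite (_ : 'i = Complex 0 1) // eq_complex /= negb_and oner_neq0 orbT.
  have h5 : 2 * conjc b = 2 * a.
    transitivity ((conjc a + conjc b) + (conjc b - conjc a)); first by ring.
    by rewrite rmorphD in h1; rewrite h1 h4; ring.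
  have := mulfI _ h5; rewrite pnatr_eq0 => /(_ isT) <-.
  by rewrite conjcK.
apply/matrixP => i j.
by rewrite /adjmx !mxE -[A i j]qf_delta (key (delta_mx j 0)) qf_delta.
Qed.


Lemma qfE m (A : 'M[C]_m) v w : qf A v w = dot v (A *m w).
Proof. by rewrite /qf /dot mulmxA. Qed.

Lemma psd0 m : psd (0 : 'M[C]_m).
Proof. by move=> v; rewrite mulmx0 mul0mx mxE. Qed.

Lemma psdD m (A B : 'M[C]_m) : psd A -> psd B -> psd (A + B).
Proof.
move=> hA hB v.
by rewrite mulmxDr mulmxDl mxE; apply: addr_ge0; [exact: hA|exact: hB].
Qed.

Lemma psdZ m (c : C) (A : 'M[C]_m) : 0 <= c -> psd A -> psd (c *: A).
Proof.
move=> hc hA v; rewrite -scalemxAr -scalemxAl mxE; exact: mulr_ge0.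
Qed.

Lemma psd_sum m I (r : seq I) (P : pred I) (F : I -> 'M[C]_m) :
  (forall i, P i -> psd (F i)) -> psd (\sum_(i <- r | P i) F i).
Proof.
move=> H; elim/big_rec: _ => [|i x Pi hx]; first exact: psd0.
exact: psdD (H _ Pi) hx.
Qed.

Lemma psd_mul_adj m k (B : 'M[C]_(m,k)) : psd (B *m adjmx B).
Proof.
move=> v; have -> : adjmx v *m (B *m adjmx B) *m v = adjmx (adjmx B *m v) *m (adjmx B *m v).
  by rewrite adjmxM adjmxK !mulmxA.
exact: dot_ge0.
Qed.

Lemma herm_qf_sq m (S : 'M[C]_m) v : adjmx S = S -> qf (S *m S) v v = dot (S *m v) (S *m v).
Proof. by move=> hS; rewrite /qf /dot adjmxM hS !mulmxA. Qed.

Lemma tr_psd_ge0 m (A : 'M[C]_m) : psd A -> 0 <= \tr A.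
Proof.
move=> hA; rewrite /mxtrace; apply: sumr_ge0 => i _.
rewrite -qf_delta; exact: hA.
Qed.

Lemma real_conj_pos (k : C) : 0 <= k -> conjc k = k.
Proof. exact: ge0_conj. Qed.

Lemma sqrt_unique m (P S : 'M[C]_m) (k : C) :
  adjmx P = P -> P *m P = P -> 0 < k -> psd S -> S *m S = (k * k) *: P ->
  S = k *: P.
Proof.
move=> hP hPP hk hS hSS.
have hSh := psd_herm hS.
have hk' : conjc k = k by apply: ge0_conj; exact: ltW.
have h1 : S *m (1%:M - P) = 0.
  apply: mx_extv => x; rewrite mul0mx.
  set y := (1%:M - P) *m x.
  have Py : P *m y = 0 by rewrite /y mulmxA mulmxBr hPP mulmx1 subrr mul0mx.
  rewrite -mulmxA -/y; apply: dot_eq0; rewrite -(herm_qf_sq y hSh) hSS /qf -scalemxAr -scalemxAl.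
  by rewrite -mulmxA Py mulmx0 scaler0 mxE.
have h2 : S *m P = S.
  by move: h1; rewrite mulmxBr mulmx1 => /eqP; rewrite subr_eq0 => /eqP <-.
have h3 : P *m S = S by rewrite -[LHS]adjmxK adjmxM hSh hP h2 hSh.
set D := S - k *: P; set T := S + k *: P.
have hDT : D *m T = 0.
  rewrite /D /T mulmxBl !mulmxDr -!scalemxAl -!scalemxAr h2 h3 hSS hPP scalerA.
  by rewrite (addrC (k *: S)) subrr.
have hT : adjmx T = T by rewrite /T adjmxD adjmxZ hSh hP hk'.
have hD : adjmx D = D by rewrite /D adjmxB adjmxZ hSh hP hk'.
have hTD : T *m D = 0 by rewrite -[LHS]adjmxK adjmxM hT hD hDT adjmx0.
have hPD : P *m D = D.
  by rewrite /D mulmxBr -scalemxAr hPP h3.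
suff : D = 0 by move/eqP; rewrite subr_eq0 => /eqP.
apply: mx_extv => x; rewrite mul0mx.
set y := D *m x.
have Ty : T *m y = 0 by rewrite /y mulmxA hTD mul0mx.
have Py : P *m y = y by rewrite /y mulmxA hPD.
have E : qf T y y = qf S y y + k * dot y y.
  rewrite /T /qf mulmxDr mulmxDl -scalemxAr -scalemxAl -(mulmxA _ P) Py.
  by rewrite [LHS]mxE [X in _ + X = _]mxE.
have : qf T y y = 0 by rewrite qfE Ty /dot mulmx0 mxE.
rewrite E => /eqP; rewrite paddr_eq0; last 2 first.
- exact: hS.
- by apply: mulr_ge0; [exact: ltW | exact: dot_ge0].
case/andP => _; rewrite mulf_eq0 (gt_eqF hk) /= => /eqP.
exact: dot_eq0.
Qed.


Lemma psd_sqrt_spec m (A : 'M[C]_m) :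
  psd (psd_sqrt A) /\ (psd_sqrt A *m psd_sqrt A = A \/ psd_sqrt A = 0).
Proof.
rewrite /psd_sqrt; case: pselect => [h|_]; last by split; [exact: psd0 | right].
by case: (cid h) => S [hS hSS] /=; split; [|left].
Qed.

Lemma psd_proj m (P : 'M[C]_m) : adjmx P = P -> P *m P = P -> psd P.
Proof.
move=> hP hPP; have -> : P = P *m adjmx P by rewrite hP hPP.
exact: psd_mul_adj.
Qed.

Lemma psd_sqrt_kP m (P : 'M[C]_m) (k : C) :
  adjmx P = P -> P *m P = P -> 0 <= k -> psd_sqrt ((k * k) *: P) = k *: P.
Proof.
move=> hP hPP; rewrite le_eqVlt => /orP [/eqP <-|hk].
  rewrite mul0r !scale0r /psd_sqrt; case: pselect => [h|_] //.
  case: (cid h) => S [hS hSS] /=.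
  rewrite (@sqrt_unique m 0 S 1) ?scaler0 ?adjmx0 ?mulmx0 ?ltr01 ?scaler0 //.
rewrite /psd_sqrt; case: pselect => [h|]; last first.
  case; exists (k *: P); split.
    by apply: psdZ; [exact: ltW | exact: psd_proj].
  by rewrite -scalemxAl -scalemxAr hPP scalerA.
case: (cid h) => S [hS hSS] /=.
exact: sqrt_unique.
Qed.


Lemma adj_r_r m (r : 'cV[C]_m) : adjmx r *m r = (dot r r)%:M.
Proof. by rewrite [LHS]mx11_scalar. Qed.

Lemma adj_mul m (v w : 'cV[C]_m) : adjmx v *m w = (dot v w)%:M.
Proof. by rewrite [LHS]mx11_scalar. Qed.

Lemma gram m (s : seq 'cV[C]_m) : exists Q : 'M[C]_m,
  [/\ adjmx Q = Q, Q *m Q = Q, (forall w, w \in s -> Q *m w = w) &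
      exists2 k, (k <= size s)%N & \tr Q = k%:R].
Proof.
elim: s => [|w s [Q [hQ hQQ hQs [k hk htr]]]].
  exists 0; split => //; [exact: adjmx0 | exact: mulmx0 | by exists 0%N; rewrite ?mxtrace0].
set r := w - Q *m w.
have Qr : Q *m r = 0 by rewrite /r mulmxBr mulmxA hQQ subrr.
have rQ : adjmx r *m Q = 0 by rewrite -hQ -adjmxM Qr adjmx0.
case: (eqVneq r 0) => [r0|rn0].
  exists Q; split => //.
    move=> v; rewrite in_cons => /orP [/eqP ->|/hQs //].
    by apply/eqP; rewrite eq_sym -subr_eq0 -/r r0.
  by exists k => //=; apply: leqW.
set d := dot r r.
have dn0 : d != 0 by apply/eqP => /dot_eq0 /eqP; rewrite (negbTE rn0).
have hd : conjc d = d by rewrite dot_conj.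
set c := d^-1.
have hc : conjc c = c by rewrite /c fmorphV /= hd.
have hcd : c * d = 1 by rewrite /c mulVf.
set X := r *m adjmx r.
exists (Q + c *: X); split.
- by rewrite adjmxD adjmxZ /X adjmxM adjmxK hQ hc.
- rewrite mulmxDl !mulmxDr hQQ -!scalemxAl -!scalemxAr.
  have -> : Q *m X = 0 by rewrite /X mulmxA Qr mul0mx.
  have -> : X *m Q = 0 by rewrite /X -mulmxA rQ mulmx0.
  have -> : X *m X = d *: X by rewrite /X mulmxA -(mulmxA r) adj_r_r mul_mx_scalar -scalemxAl.
  by rewrite !scaler0 !add0r addr0 !scalerA -mulrA hcd mulr1.
- move=> v; rewrite in_cons => /orP [/eqP ->|vs].
    rewrite mulmxDl -scalemxAl /X -mulmxA.
    have -> : adjmx r *m w = d%:M.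
      have -> : w = r + Q *m w by rewrite /r subrK.
      by rewrite mulmxDr adj_r_r mulmxA rQ mul0mx addr0.
    by rewrite mul_mx_scalar scalerA hcd scale1r /r addrC subrK.
  rewrite mulmxDl (hQs _ vs) -scalemxAl /X -mulmxA.
  have -> : adjmx r *m v = 0 by rewrite -(hQs _ vs) mulmxA rQ mul0mx.
  by rewrite mulmx0 scaler0 addr0.
- exists k.+1 => //; rewrite mxtraceD mxtraceZ htr /X mxtrace_mulC adj_r_r.
  by rewrite mxtrace_scalar mulr1n -/d hcd -natr1.
Qed.


Lemma tr_bound m (T Q : 'M[C]_m) (a b : C) :
  adjmx T = T -> adjmx Q = Q -> Q *m Q = Q -> T *m Q = T ->
  conjc a = a -> conjc b = b ->
  0 <= a * a * \tr Q - 2 * (a * b) * \tr T + b * b * \tr (T *m T).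
Proof.
move=> hT hQ hQQ hTQ ha hb.
have hQT : Q *m T = T by rewrite -[LHS]adjmxK adjmxM hQ hT hTQ hT.
set M := a *: Q - b *: T.
have hM : adjmx M = M by rewrite /M adjmxB !adjmxZ ha hb hQ hT.
have := tr_psd_ge0 (psd_mul_adj (adjmx M)); rewrite adjmxK hM.
have -> : M *m M = (a * a) *: Q - (a * b) *: T - (a * b) *: T + (b * b) *: (T *m T).
  rewrite /M mulmxBl !mulmxBr -!scalemxAl -!scalemxAr hQQ hQT hTQ !scalerA.
  by rewrite (mulrC b a) -!addrA opprB (addrC (_ *: (T *m T))).
rewrite !mxtraceD !raddfN /= !mxtraceZ.
suff -> : a * a * \tr Q - a * b * \tr T - a * b * \tr T + b * b * \tr (T *m T) =
  a * a * \tr Q - 2 * (a * b) * \tr T + b * b * \tr (T *m T) by [].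
ring.
Qed.


Lemma tensmxDl m1 n1 m2 n2 (A B : 'M[C]_(m1,n1)) (D : 'M[C]_(m2,n2)) :
  (A + B) *t D = A *t D + B *t D.
Proof. by apply/matrixP => i j; rewrite !mxE mulrDl. Qed.
Lemma tensmxNl m1 n1 m2 n2 (A : 'M[C]_(m1,n1)) (D : 'M[C]_(m2,n2)) :
  (- A) *t D = - (A *t D).
Proof. by apply/matrixP => i j; rewrite !mxE mulNr. Qed.
Lemma tensmxBl m1 n1 m2 n2 (A B : 'M[C]_(m1,n1)) (D : 'M[C]_(m2,n2)) :
  (A - B) *t D = A *t D - B *t D.
Proof. by rewrite tensmxDl tensmxNl. Qed.
Lemma tensmxZr m1 n1 m2 n2 (c : C) (A : 'M[C]_(m1,n1)) (D : 'M[C]_(m2,n2)) :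
  A *t (c *: D) = c *: (A *t D).
Proof. by apply/matrixP => i j; rewrite !mxE mulrCA. Qed.
Lemma tensmx_sumr m1 n1 m2 n2 I (r : seq I) (P : pred I) (A : 'M[C]_(m1,n1)) (F : I -> 'M[C]_(m2,n2)) :
  A *t (\sum_(i <- r | P i) F i) = \sum_(i <- r | P i) (A *t F i).
Proof.
apply/matrixP => i j; rewrite !mxE !summxE mulr_sumr.
by apply: eq_bigr => k _; rewrite !mxE.
Qed.

Lemma tens11 (A B : 'M[C]_1) : (A *t B) 0 0 = A 0 0 * B 0 0.
Proof. by rewrite !mxE; rewrite !(ord1 (_ : 'I_1)) /=. Qed.


Local Notation rc x := (real_complex R x).

Lemma rcM x y : rc (x * y) = rc x * rc y. Proof. exact: rmorphM. Qed.
Lemma rcD x y : rc (x + y) = rc x + rc y. Proof. exact: rmorphD. Qed.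
Lemma rcB x y : rc (x - y) = rc x - rc y. Proof. exact: rmorphB. Qed.
Lemma rcV x : rc (x^-1) = (rc x)^-1. Proof. exact: fmorphV. Qed.
Lemma rcn k : rc (k%:R) = k%:R. Proof. exact: rmorph_nat. Qed.
Lemma rc1 : rc 1 = 1. Proof. exact: rmorph1. Qed.
Lemma rc_ge0 x : (0 <= rc x) = (0 <= x). Proof. exact: ler0c. Qed.
Lemma rc_le x y : (rc x <= rc y) = (x <= y). Proof. exact: lecR. Qed.
Lemma rc_conj x : conjc (rc x) = rc x. Proof. by rewrite /= oppr0. Qed.
Lemma Re_rc x : complex.Re (rc x) = x. Proof. by []. Qed.
Lemma ReM_rc x z : complex.Re (rc x * z) = x * complex.Re z.
Proof. by case: z => a b /=; rewrite mul0r subr0. Qed.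
Lemma Re_ge0 (z : C) : 0 <= z -> 0 <= complex.Re z.
Proof. by rewrite lecE => /andP [] /=. Qed.
Lemma Re_le (z w : C) : z <= w -> complex.Re z <= complex.Re w.
Proof. by rewrite lecE => /andP []. Qed.
Lemma Re_nat k : complex.Re (k%:R : C) = k%:R.
Proof. by rewrite -rcn. Qed.


Section Proj.
Variables (m k : nat) (f : 'I_k -> 'cV[C]_m).
Hypothesis hf : forall i j, dot (f i) (f j) = (i == j)%:R.

Definition proj : 'M[C]_m := \sum_i f i *m adjmx (f i).

Lemma proj_herm : adjmx proj = proj.
Proof. by rewrite /proj adjmx_sum; apply: eq_bigr => i _; rewrite adjmxM adjmxK. Qed.

Lemma proj_idem : proj *m proj = proj.
Proof.
rewrite /proj mulmx_suml; apply: eq_bigr => i _.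
rewrite mulmx_sumr (bigD1 i) //= big1 ?addr0.
  by rewrite mulmxA -(mulmxA (f i)) adj_mul hf eqxx mul_mx_scalar scale1r.
move=> j hj; rewrite mulmxA -(mulmxA (f i)) adj_mul hf eq_sym (negbTE hj).
by rewrite mul_mx_scalar scale0r mul0mx.
Qed.

Lemma proj_tr : \tr proj = k%:R.
Proof.
rewrite /proj raddf_sum /= (eq_bigr (fun _ => 1)) ?sumr_const ?card_ord //.
by move=> i _; rewrite mxtrace_mulC adj_r_r mxtrace_scalar hf eqxx.
Qed.

Lemma tr_outer (A : 'M[C]_m) (v : 'cV[C]_m) : \tr (v *m adjmx v *m A) = qf A v v.
Proof.
by rewrite -mulmxA mxtrace_mulC /mxtrace big_ord1.
Qed.

Lemma bessel (w : 'M[C]_m) : psd w -> \sum_i qf w (f i) (f i) <= \tr w.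
Proof.
move=> hw.
have -> : \sum_i qf w (f i) (f i) = \tr (proj *m w).
  rewrite /proj mulmx_suml raddf_sum /=; apply: eq_bigr => i _; by rewrite tr_outer.
rewrite -subr_ge0.
have -> : \tr w - \tr (proj *m w) = \tr ((1%:M - proj) *m w *m (1%:M - proj)).
  rewrite [RHS]mxtrace_mulC mulmxA.
  have -> : (1%:M - proj) *m (1%:M - proj) = 1%:M - proj.
    by rewrite mulmxBl mul1mx mulmxBr mulmx1 proj_idem subrr subr0.
  by rewrite mulmxBl mul1mx raddfB.
apply: tr_psd_ge0 => v.
have -> : adjmx v *m ((1%:M - proj) *m w *m (1%:M - proj)) *m v =
  adjmx ((1%:M - proj) *m v) *m w *m ((1%:M - proj) *m v).
  by rewrite adjmxM adjmxB adjmx1 proj_herm !mulmxA.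
exact: hw.
Qed.

End Proj.

Section Prob.
Variables (dA dR n : nat).
Variable (e : 'I_n -> 'cV[C]_dR).
Hypothesis he : forall i j : 'I_n, (adjmx (e i) *m e j) 0 0 = (i == j)%:R.
Variable (psi : 'I_n -> 'cV[C]_dA).
Hypothesis hpsi : forall i : 'I_n, (adjmx (psi i) *m psi i) 0 0 = 1.

Definition u (i : 'I_n) : 'cV[C]_(dA * dR) := psi i *t e i.

Lemma u_outer i : (psi i *m adjmx (psi i)) *t (e i *m adjmx (e i)) = u i *m adjmx (u i).
Proof.
have E := tensmx_mul (psi i) (e i) (adjmx (psi i)) (adjmx (e i)).
rewrite -adjmx_tens in E; exact: (esym E).
Qed.

Lemma dot_u i j : dot (u i) (u j) = (i == j)%:R.
Proof.
have E := tensmx_mul (adjmx (psi i)) (adjmx (e i)) (psi j) (e j).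
rewrite -adjmx_tens in E.
have := congr1 (fun M : 'M[C]_1 => M 0 0) E; rewrite tens11 he => E'.
rewrite /dot /u; rewrite [LHS]E'.
case: eqVneq => [->|_]; first by rewrite hpsi mulr1.
by rewrite mulr0.
Qed.

Definition Pm : 'M[C]_(dA * dR) := proj u.
Lemma Pm_herm : adjmx Pm = Pm. Proof. exact: proj_herm. Qed.
Lemma Pm_idem : Pm *m Pm = Pm. Proof. exact: proj_idem dot_u. Qed.
Lemma Pm_tr : \tr Pm = n%:R. Proof. exact: proj_tr dot_u. Qed.

Lemma rhoE : cq_state psi e = (n%:R^-1) *: Pm.
Proof. by rewrite /cq_state /Pm /proj; congr (_ *: _); apply: eq_bigr => i _; rewrite u_outer. Qed.


Lemma qf_adj m p (X : 'M[C]_(p,m)) y : qf (adjmx X *m X) y y = dot (X *m y) (X *m y).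
Proof. by rewrite /qf /dot adjmxM !mulmxA. Qed.

Lemma qfD m (A B : 'M[C]_m) v : qf (A + B) v v = qf A v v + qf B v v.
Proof. by rewrite /qf mulmxDr mulmxDl mxE. Qed.
Lemma qfN m (A : 'M[C]_m) v : qf (- A) v v = - qf A v v.
Proof. by rewrite /qf mulmxN mulNmx mxE. Qed.
Lemma qfZ m (c : C) (A : 'M[C]_m) v : qf (c *: A) v v = c * qf A v v.
Proof. by rewrite /qf -scalemxAr -scalemxAl mxE. Qed.

Lemma qf_tens_u (w : 'M[C]_dR) i : qf (1%:M *t w) (u i) (u i) = qf w (e i) (e i).
Proof.
rewrite /qf /u.
have E1 := tensmx_mul (adjmx (psi i)) (adjmx (e i)) 1%:M w.
rewrite -adjmx_tens in E1.
have E2 := tensmx_mul (adjmx (psi i) *m 1%:M) (adjmx (e i) *m w) (psi i) (e i).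
rewrite -E1 in E2.
have := congr1 (fun M : 'M[C]_1 => M 0 0) E2.
rewrite tens11 mulmx1 hpsi mul1r => <-; by [].
Qed.

Lemma tr_Pm_sigma (sigma w : 'M[C]_(_)) (a : R) : 0 <= a -> psd w -> \tr w = 1 ->
  loewner_le sigma (rc a *: ((1%:M : 'M[C]_dA) *t w)) -> \tr (Pm *m sigma) <= rc a.
Proof.
move=> a0 hw trw hl.
have -> : \tr (Pm *m sigma) = \sum_i qf sigma (u i) (u i).
  rewrite /Pm /proj mulmx_suml raddf_sum /=; apply: eq_bigr => i _; by rewrite tr_outer.
apply: (@le_trans _ _ (rc a * \sum_i qf w (e i) (e i))).
  rewrite mulr_sumr; apply: ler_sum => i _.
  have := hl (u i); rewrite -/(qf _ (u i) (u i)) qfD qfN qfZ qf_tens_u subr_ge0; by [].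
rewrite -[X in _ <= X]mulr1 -trw; apply: ler_wpM2l; first by rewrite rc_ge0.
by apply: bessel => // i j; exact: he.
Qed.


Hypothesis hn : (0 < n)%N.

Definition kap : R := Num.sqrt (n%:R^-1).

Lemma kap_sq : kap * kap = n%:R^-1.
Proof. by rewrite /kap -expr2 sqr_sqrtr // invr_ge0 ler0n. Qed.

Lemma kap_ge0 : 0 <= kap. Proof. exact: sqrtr_ge0. Qed.

Lemma KK : rc kap * rc kap = (n%:R^-1 : C).
Proof. by rewrite -rcM kap_sq rcV rcn. Qed.

Lemma sqrt_rho : psd_sqrt (cq_state psi e) = rc kap *: Pm.
Proof.
rewrite rhoE -KK; apply: psd_sqrt_kP; [exact: Pm_herm | exact: Pm_idem |].
by rewrite rc_ge0 kap_ge0.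
Qed.

Lemma ReD (x y : C) : complex.Re (x + y) = complex.Re x + complex.Re y.
Proof. by case: x; case: y. Qed.
Lemma ReN (x : C) : complex.Re (- x) = - complex.Re x.
Proof. by case: x. Qed.

Lemma X_kill (S Q : 'M[C]_(dA * dR)) : adjmx S = S -> adjmx Q = Q ->
  (forall i, Q *m (S *m u i) = S *m u i) -> Pm *m S *m (1%:M - Q) = 0.
Proof.
move=> hS hQ hQu.
rewrite /Pm /proj !mulmx_suml big1 // => i _.
rewrite -!mulmxA.
have -> : adjmx (u i) *m (S *m (1%:M - Q)) = adjmx ((1%:M - Q) *m (S *m u i)).
  by rewrite !adjmxM adjmxB adjmx1 hS hQ mulmxA.
by rewrite mulmxBl mul1mx hQu subrr adjmx0 mulmx0.
Qed.


Lemma F_bound (sigma : 'M[C]_(dA * dR)) (w : 'M[C]_dR) (a : R) :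
  0 < a -> psd sigma -> psd w -> \tr w = 1 ->
  loewner_le sigma (rc a *: ((1%:M : 'M[C]_dA) *t w)) ->
  0 <= trR (psd_sqrt (adjmx (psd_sqrt (cq_state psi e) *m psd_sqrt sigma) *m
                         (psd_sqrt (cq_state psi e) *m psd_sqrt sigma))) /\
  trR (psd_sqrt (adjmx (psd_sqrt (cq_state psi e) *m psd_sqrt sigma) *m
                         (psd_sqrt (cq_state psi e) *m psd_sqrt sigma))) ^+ 2 <= a.
Proof.
move=> a0 hsig hw trw hl.
have [hS hSS] := psd_sqrt_spec sigma.
have hSh := psd_herm hS.
rewrite sqrt_rho; set S := psd_sqrt sigma in hS hSS hSh *.
set X := rc kap *: Pm *m S.
have hXX : adjmx X *m X = (rc kap * rc kap) *: (S *m (Pm *m S)).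
  rewrite /X adjmxM adjmxZ rc_conj Pm_herm hSh -!scalemxAl -!scalemxAr -scalemxAl scalerA -!mulmxA (mulmxA Pm) Pm_idem.
  by [].

have trXX : \tr (adjmx X *m X) <= rc kap * rc kap * rc a.
  rewrite hXX mxtraceZ; apply: ler_wpM2l; first by rewrite -rcM rc_ge0 mulr_ge0 ?kap_ge0.
  rewrite mxtrace_mulC -mulmxA; case: hSS => [->|->].
    exact: (tr_Pm_sigma (ltW a0) hw trw hl).
  by rewrite mulmx0 mulmx0 mxtrace0 rc_ge0 ltW.
set T := psd_sqrt (adjmx X *m X).
have [hT hTT] := psd_sqrt_spec (adjmx X *m X).
rewrite -/T in hT hTT.
have F0 : 0 <= trR T by apply: Re_ge0; exact: tr_psd_ge0.
set F := trR T; split => //.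
case: hTT => [hTT|T0]; last by rewrite /F T0 /trR mxtrace0 /= expr0n /= ltW.
have hTh := psd_herm hT.
have [Q [hQ hQQ hQs [k hk trQ]]] := gram [seq S *m u i | i <- enum 'I_n].
rewrite size_map size_enum_ord in hk.
have hXQ : X *m (1%:M - Q) = 0.
  rewrite /X -!scalemxAl X_kill ?scaler0 //.
  by move=> i; apply: hQs; apply/mapP; exists i => //; rewrite mem_enum.
have hTQ : T *m Q = T.
  have : T *m (1%:M - Q) = 0.
    apply: mx_extv => x; rewrite mul0mx -mulmxA; set y := (1%:M - Q) *m x.
    by apply: dot_eq0; rewrite -(herm_qf_sq y hTh) hTT qf_adj /y mulmxA hXQ mul0mx /dot mulmx0 mxE.

  by rewrite mulmxBr mulmx1 => /eqP; rewrite subr_eq0 => /eqP <-.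
set sa := Num.sqrt a.
have sa0 : 0 < sa by rewrite sqrtr_gt0.
have saa : sa * sa = a by rewrite -expr2 sqr_sqrtr // ltW.
have := tr_bound (a:=rc sa) (b:=rc n%:R) hTh hQ hQQ hTQ (rc_conj _) (rc_conj _).
rewrite hTT trQ => /Re_ge0.
rewrite !ReD ReN -!rcM -rcn -!rcM !ReM_rc Re_rc => H.
have hk' : (k%:R <= n%:R :> R) by rewrite ler_nat.
have ht : complex.Re (\tr (adjmx X *m X)) <= kap * kap * a.
  by have := Re_le trXX; rewrite -!rcM Re_rc.
rewrite kap_sq in ht.
have n0 : 0 < (n%:R : R) by rewrite ltr0n.
have hnk : (n%:R : R) * n%:R^-1 = 1 by rewrite mulfV // gt_eqF.
rewrite -/(trR T) -/F in H F0 *.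
have HF : F <= sa.
  have h1 : (n%:R : R) * n%:R * complex.Re (\tr (adjmx X *m X)) <= n%:R * a.
    have := ler_wpM2l (mulr_ge0 (ltW n0) (ltW n0)) ht.
    by rewrite mulrA -(mulrA _ _ (n%:R^-1)) hnk mulr1.
  have h2 : sa * sa * k%:R <= n%:R * a.
    by rewrite saa mulrC; apply: ler_wpM2r => //; exact: ltW.
  have h3 : 2 * (sa * n%:R) * F <= 2 * (sa * n%:R) * sa.
    have E2 : complex.Re (2 * rc (sa * n%:R) * \tr T) = 2 * (sa * n%:R) * F.
      by rewrite -(rcn 2) -rcM ReM_rc.
    rewrite E2 in H.
    have : 2 * (sa * n%:R) * sa = 2 * (n%:R * a) by rewrite -saa; ring.
    move=> ->; lra.
  by move: h3; rewrite ler_pM2l // mulr_gt0 // mulr_gt0.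
have : F * F <= sa * sa by apply: ler_pM.
by rewrite saa expr2.
Qed.


Lemma psd_rho : psd (cq_state psi e).
Proof.
rewrite rhoE; apply: psdZ; last by apply: psd_proj; [exact: Pm_herm | exact: Pm_idem].
by rewrite invr_ge0 ler0n.
Qed.

Lemma tr_rho : \tr (cq_state psi e) = 1.
Proof. by rewrite rhoE mxtraceZ Pm_tr mulVf // pnatr_eq0 -lt0n. Qed.

Lemma sqrt_sigma0 (c : R) : 0 <= c ->
  psd_sqrt (rc c *: cq_state psi e) = (rc (Num.sqrt c) * rc kap) *: Pm.
Proof.
move=> c0; rewrite rhoE scalerA.
have -> : rc c * n%:R^-1 = (rc (Num.sqrt c) * rc kap) * (rc (Num.sqrt c) * rc kap).
  have sc : Num.sqrt c * Num.sqrt c = c by rewrite -expr2 sqr_sqrtr.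
  by rewrite mulrACA -KK -(rcM (Num.sqrt c)) sc.
apply: psd_sqrt_kP; [exact: Pm_herm | exact: Pm_idem |].
by rewrite -rcM rc_ge0 mulr_ge0 ?sqrtr_ge0 ?kap_ge0.
Qed.

Lemma gfid_sigma0 (c : R) : 0 <= c ->
  gfid (cq_state psi e) (rc c *: cq_state psi e) = Num.sqrt c.
Proof.
move=> c0; rewrite /gfid sqrt_sigma0 // sqrt_rho.
set k := rc (Num.sqrt c) * rc kap.
rewrite /trnorm.
have -> : adjmx (rc kap *: Pm *m (k *: Pm)) *m (rc kap *: Pm *m (k *: Pm)) =
  ((rc kap * k) * (rc kap * k)) *: Pm.
  have hk : conjc (rc kap * k) = rc kap * k by rewrite /k -!rcM rc_conj.
  rewrite -!scalemxAl -!scalemxAr !Pm_idem !scalerA adjmxZ hk Pm_herm -scalemxAl Pm_idem scalerA //.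
rewrite psd_sqrt_kP; first last.
- by rewrite /k -!rcM rc_ge0 !mulr_ge0 ?sqrtr_ge0 ?kap_ge0.
- exact: Pm_idem.
- exact: Pm_herm.
have -> : trR (cq_state psi e) = 1 by rewrite /trR tr_rho.
rewrite subrr mul0r sqrtr0 addr0 /trR mxtraceZ Pm_tr /k.
have -> : rc kap * (rc (Num.sqrt c) * rc kap) * n%:R = rc (Num.sqrt c) * ((rc kap * rc kap) * n%:R) by ring.
by rewrite KK mulVf ?pnatr_eq0 -?lt0n // mulr1.
Qed.

Definition omega0 : 'M[C]_dR := n%:R^-1 *: proj e.

Lemma density_omega0 : density omega0.
Proof.
have he' : forall i j, dot (e i) (e j) = (i == j)%:R by exact: he.
split.
  apply: psdZ; first by rewrite invr_ge0 ler0n.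
  by apply: psd_proj; [exact: proj_herm | exact: proj_idem].
by rewrite /omega0 mxtraceZ (proj_tr he') mulVf // pnatr_eq0 -lt0n.
Qed.

Lemma loewner0 (c : R) : 0 <= c ->
  loewner_le (rc c *: cq_state psi e) (rc c *: ((1%:M : 'M[C]_dA) *t omega0)).
Proof.
move=> c0; rewrite /loewner_le -scalerBr; apply: psdZ; first by rewrite rc_ge0.
rewrite /omega0 tensmxZr /cq_state -scalerBr; apply: psdZ; first by rewrite invr_ge0 ler0n.
rewrite /proj tensmx_sumr -sumrB; apply: psd_sum => i _.
rewrite -tensmxBl.
set M := 1%:M - psi i *m adjmx (psi i).
have hM : M *m adjmx M = M.
  have pp : adjmx (psi i) *m psi i = 1%:M by rewrite adj_mul; congr (_%:M); exact: hpsi.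
  rewrite /M adjmxB adjmx1 adjmxM adjmxK mulmxBl mul1mx mulmxBr mulmx1.
  by rewrite mulmxA -(mulmxA (psi i)) pp mulmx1 subrr subr0.
have E := tensmx_mul M (e i) (adjmx M) (adjmx (e i)).
rewrite -adjmx_tens hM in E.
rewrite -E; exact: psd_mul_adj.
Qed.

End Prob.


Lemma two_pow_L (c : R) : 0 < c -> 2 `^ (- log2 (1 / c)) = c.
Proof.
move=> c0; rewrite /powR pnatr_eq0 /= /log2 div1r lnV ?posrE //.
have l2 : ln (2 : R) != 0 by rewrite gt_eqF // ln_gt0 // ltr1n.
by rewrite mulNr -mulrA mulVf // mulr1 opprK lnK.
Qed.

Lemma le_log2 (c l : R) : 0 < c -> c <= 2 `^ (- l) -> l <= log2 (1 / c).
Proof.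
move=> c0 hc.
have l2 : 0 < ln (2 : R) by rewrite ln_gt0 // ltr1n.
have a0 : 0 < (2 : R) `^ (- l) by apply: powR_gt0.
have := hc; rewrite -ler_ln ?posrE // ln_powR => h.
rewrite /log2 div1r lnV ?posrE // ler_pdivlMr //; lra.
Qed.

End L.

Unset Implicit Arguments.
Set Strict Implicit.

Theorem lemma1 (R : realType) (dA dR n : nat) (hn : (0 < n)%N)
  (e : 'I_n -> 'cV[R[i]]_dR)
  (he : forall i j : 'I_n, (adjmx (e i) *m e j) 0 0 = (i == j)%:R)
  (psi : 'I_n -> 'cV[R[i]]_dA)
  (hpsi : forall i : 'I_n, (adjmx (psi i) *m psi i) 0 0 = 1)
  (eps : R) (heps0 : 0 <= eps) (heps1 : eps < 1) :
  Hmin_smooth eps (cq_state psi e) = (log2 (1 / (1 - eps ^+ 2)))%:E.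
Proof.
set c := 1 - eps ^+ 2.
have c0 : 0 < c by rewrite /c; nra.
have c1 : c <= 1 by rewrite /c lerBlDr lerDl sqr_ge0.
have trrho : trR (cq_state psi e) = 1 by rewrite /trR (tr_rho he hpsi hn).
apply/eqP; rewrite eq_le; apply/andP; split.
- apply: ub_ereal_sup => _ [sig [hsig [htr hpd]] <-].
  apply: ub_ereal_sup => _ [w hw <-].
  apply: ub_ereal_sup => _ [l hl <-].
  rewrite lee_fin; apply: le_log2 => //.
  set a := 2 `^ (- l).
  have a0 : 0 < a by apply: powR_gt0.
  have [F0 F2] := F_bound he hpsi hn a0 hsig hw.1 hw.2 hl.
  move: hpd; rewrite /pdist /gfid trrho subrr mul0r sqrtr0 addr0.
  set F := trR _ in F0 F2 *.
  move=> hpd.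
  case: (lerP (1 - F ^+ 2) 0) => h.
    apply: le_trans F2; lra.
  have : 1 - F ^+ 2 <= eps ^+ 2.
    by rewrite -(ler_sqrt _ (sqr_ge0 eps)) sqrtr_sqr ger0_norm.
  rewrite /c; lra.
- set sig0 := real_complex R c *: cq_state psi e.
  apply: (@le_trans _ _ (Hmin sig0)); last first.
    apply: ereal_sup_ubound; exists sig0 => //; split.
      apply: psdZ; [by rewrite rc_ge0 ltW | exact: psd_rho].
    split.
      by rewrite /trR mxtraceZ (tr_rho he hpsi hn) mulr1.
    rewrite /pdist (gfid_sigma0 he hpsi hn (ltW c0)) sqr_sqrtr; last exact: ltW.
    by rewrite /c opprB addrC subrK sqrtr_sqr ger0_norm.
  apply: (@le_trans _ _ (ereal_sup [set l%:E | l in [set l : R | loewner_le sig0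
         ((Complex (2 `^ (- l)) 0) *: ((1%:M : 'M[R[i]]_dA) *t omega0 e))]])); last first.
    apply: ereal_sup_ubound; exists (omega0 e); first exact: (density_omega0 he hn).
    reflexivity.
  apply: ereal_sup_ubound; exists (log2 (1 / c)); last by [].
  rewrite /=.
  rewrite two_pow_L //; exact: (loewner0 e hpsi (ltW c0)).
Qed.
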